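(* Let $S$ be a semigroup, $I, J$ sets and $P$ a $J\times I$ matrix, and let $M$ be either $M(S; I, J; P)$ (entries of $P$ in $S$) or $M^0(S; I, J; P)$ (entries of $P$ in $S \cup \{0\}$), and suppose $M$ is finitely generated. Choose $i \in I$ and $j \in J$ with $P_{ji} \neq 0$ and let $T = \{(i, s, j) : s \in S\} \subseteq M$. If for every $j' \in J$ we have either $P_{j'i} = 0$ or $S P_{j'i} \subseteq S P_{ji}$, then $T$ is a pseudo-right-unitary subsemigroup of $M$.
   Context: The Rees matrix semigroup with zero $M^0(S; I, J; P)$ (where $0 \notin S$) has elements $(I \times S \times J) \cup \{0\}$, $0$ is a zero, and $(i_1, g_1, j_1)(i_2, g_2, j_2) = (i_1, g_1 P_{j_1 i_2} g_2, j_2)$ if $P_{j_1 i_2} \in S$ and $=0$ if $P_{j_1 i_2} = 0$. If $P$ has no zero entries, $M(S;I,J;P)$ is the subsemigroup $I \times S \times J$. A subsemigroup $T$ of a semigroup $M$ is pseudo-right-unitary if for every $a \in M$ there exists $b \in T$ such that $ax = bx$ for every $x \in T$ with $ax \in T$. *)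

(* Defs.v *)
From Stdlib Require Import List.

Inductive generated {X : Type} (op : X -> X -> X) (A : X -> Prop) : X -> Prop :=
  | gen_base : forall x, A x -> generated op A x
  | gen_mul : forall x y, generated op A x -> generated op A y -> generated op A (op x y).

Definition finitely_generated {X : Type} (op : X -> X -> X) : Prop :=
  exists l : list X, forall x, generated op (fun y => In y l) x.

Definition is_subsemigroup {X : Type} (op : X -> X -> X) (T : X -> Prop) : Prop :=
  forall x y, T x -> T y -> T (op x y).

Definition pseudo_right_unitary {X : Type} (op : X -> X -> X) (T : X -> Prop) : Prop :=
  is_subsemigroup op T /\
  forall a : X, exists b : X, T b /\
    forall x : X, T x -> T (op a x) -> op a x = op b x.

Definition rees_mul {S I J : Type} (mul : S -> S -> S) (P : J -> I -> S)
  (x y : I * S * J) : I * S * J :=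
  match x, y with
  | (i1, g1, j1), (i2, g2, j2) => (i1, mul (mul g1 (P j1 i2)) g2, j2)
  end.

(* Rees matrix semigroup with zero M^0(S; I, J; P): elements are
   option (I * S * J), None being the zero; P has entries in S u {0},
   encoded as option S with None = 0. *)
Definition rees0_mul {S I J : Type} (mul : S -> S -> S) (P : J -> I -> option S)
  (x y : option (I * S * J)) : option (I * S * J) :=
  match x, y with
  | Some (i1, g1, j1), Some (i2, g2, j2) =>
      match P j1 i2 with
      | Some p => Some (i1, mul (mul g1 p) g2, j2)
      | None => None
      end
  | _, _ => None
  end.

(* Main.v *)
Require Import Defs.
From Stdlib Require Import List.

Theorem proposition5p1 :
  forall (S : Type) (mul : S -> S -> S)
    (mulA : forall a b c, mul a (mul b c) = mul (mul a b) c)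
    (I J : Type),
  (* Case M = M(S; I, J; P) *)
  (forall (P : J -> I -> S) (i : I) (j : J),
     finitely_generated (rees_mul mul P) ->
     (forall j' : J, forall s : S, exists t : S, mul s (P j' i) = mul t (P j i)) ->
     pseudo_right_unitary (rees_mul mul P)
       (fun x : I * S * J => fst (fst x) = i /\ snd x = j))
  /\
  (* Case M = M^0(S; I, J; P) *)
  (forall (P : J -> I -> option S) (i : I) (j : J),
     finitely_generated (rees0_mul mul P) ->
     P j i <> None ->
     (forall j' : J, P j' i = None \/
        (exists p' p : S, P j' i = Some p' /\ P j i = Some p /\
           forall s : S, exists t : S, mul s p' = mul t p)) ->
     pseudo_right_unitary (rees0_mul mul P)
       (fun x : option (I * S * J) => exists s : S, x = Some (i, s, j))).
Proof.
  intros S mul mulA I J. split.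
  - intros P i j _ H. split.
    + intros [[i1 g1] j1] [[i2 g2] j2] [E1 E2] [E3 E4]; simpl in *; subst; split; reflexivity.
    + intros [[i1 g1] j1]. destruct (H j1 g1) as [t Ht].
      exists (i, t, j). split; [split; reflexivity|].
      intros [[i2 g2] j2] [E1 E2] [E3 E4]; simpl in *; subst.
      rewrite Ht. reflexivity.
  - intros P i j _ Hji H. destruct (P j i) as [p|] eqn:Ep; [|congruence]. split.
    + intros x y [s Hx] [s' Hy]; subst. simpl. rewrite Ep. eexists; reflexivity.
    + intros a. destruct a as [[[i1 g1] j1]|].
      2: { exists (Some (i, p, j)). split; [eexists; reflexivity|].
           intros x _ [s Hs]; simpl in Hs; discriminate. }
      destruct (H j1) as [E|[p' [p0 [E1 [E2 Hs]]]]].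
      * exists (Some (i, p, j)). split; [eexists; reflexivity|].
        intros x [s Hx] [s' Hs]; subst; simpl in Hs. rewrite E in Hs; discriminate.
      * injection E2 as <-. destruct (Hs g1) as [t Ht].
        exists (Some (i, t, j)). split; [eexists; reflexivity|].
        intros x [s Hx] [s' Hs']; subst; simpl in *. rewrite E1 in Hs'. rewrite E1, Ep.
        injection Hs' as -> _. rewrite Ht. reflexivity.
Qed.
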